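(* Let $A=\bigoplus_k A_k$ and $B=\bigoplus_k B_k$ be graded Lie algebras and let $(\alpha,\beta)$ be a derivatively knitted pair of representations for $(A,B)$. Then the graded vector space $A\oplus B$ with grading $(A\oplus B)_k:=A_k\oplus B_k$ becomes a graded Lie algebra, denoted $A\oplus_{(\alpha,\beta)}B$, with the bracket (for homogeneous elements, extended bilinearly) $$[(a_1,b_1),(a_2,b_2)] := \Bigl([a_1,a_2] + \beta(b_1)a_2 - (-1)^{|b_2||a_1|}\beta(b_2)a_1,\ [b_1,b_2] + \alpha(a_1)b_2 - (-1)^{|a_2||b_1|}\alpha(a_2)b_1\Bigr).$$ That is, this bracket is bilinear, of degree $0$, graded anticommutative and satisfies the graded Jacobi identity.
   Context: All gradings are either by $\mathbb Z$ or by $\mathbb Z_2$ (the same for all objects considered); $|x|$ denotes the degree of a homogeneous element $x$. For a graded vector space $V$, $\mathrm{End}(V)$ denotes the graded Lie algebra of linear endomorphisms of $V$ (graded by degree), with the graded commutator $[S,T]=ST-(-1)^{|S||T|}TS$. A derivatively knitted pair of representations $(\alpha,\beta)$ for graded Lie algebras $(A,B)$ consists of graded Lie algebra homomorphisms (of degree $0$) $\alpha:A\to\mathrm{End}(B)$ and $\beta:B\to\mathrm{End}(A)$ such that for all homogeneous $a,a_1,a_2\in A$ and $b,b_1,b_2\in B$: $$\alpha(a)[b_1,b_2] = [\alpha(a)b_1,b_2] + (-1)^{|a||b_1|}[b_1,\alpha(a)b_2] - \Bigl((-1)^{|a||b_1|}\alpha(\beta(b_1)a)b_2 - (-1)^{(|a|+|b_1|)|b_2|}\alpha(\beta(b_2)a)b_1\Bigr),$$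 $$\beta(b)[a_1,a_2] = [\beta(b)a_1,a_2] + (-1)^{|b||a_1|}[a_1,\beta(b)a_2] - \Bigl((-1)^{|b||a_1|}\beta(\alpha(a_1)b)a_2 - (-1)^{(|b|+|a_1|)|a_2|}\beta(\alpha(a_2)b)a_1\Bigr).$$ For ungraded Lie algebras all degrees are taken to be $0$. *)

(* Defs.v *)
From HB Require Import structures.
From mathcomp Require Import all_boot all_order all_algebra.
Set Implicit Arguments. Unset Strict Implicit. Unset Printing Implicit Defensive.
Import GRing.Theory.
Local Open Scope ring_scope.

Inductive grading := ZGrading | Z2Grading.

Definition degT (g : grading) : zmodType :=
  match g with ZGrading => int | Z2Grading => 'Z_2 end.

Definition par (g : grading) : degT g -> bool :=
  match g as g0 return degT g0 -> bool with
  | ZGrading => fun x : int => odd `|x|%N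
  | Z2Grading => fun x : 'Z_2 => odd (val x)
  end.

Definition gsign (K : fieldType) (g : grading) (i j : degT g) : K :=
  (-1) ^+ (par i && par j).

Section Defs.
Variables (K : fieldType) (g : grading).
Local Notation D := (degT g).

Definition is_subspace (V : lmodType K) (P : pred V) : Prop :=
  0 \in P /\ forall (c : K) (u v : V), u \in P -> v \in P -> c *: u + v \in P.

Definition graded_space (V : lmodType K) (H : D -> pred V) : Prop :=
  [/\ forall k, is_subspace (H k),
      forall v : V, exists (s : seq D) (f : D -> V),
        [/\ uniq s, forall k, f k \in H k & v = \sum_(k <- s) f k]
    & forall (s : seq D) (f : D -> V), uniq s -> (forall k, f k \in H k) ->
        \sum_(k <- s) f k = 0 -> forall k, k \in s -> f k = 0].

Definition bilinear_map (U V W : lmodType K) (f : U -> V -> W) : Prop :=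
  (forall (c : K) u1 u2 v, f (c *: u1 + u2) v = c *: f u1 v + f u2 v) /\
  (forall u (c : K) v1 v2, f u (c *: v1 + v2) = c *: f u v1 + f u v2).

Definition graded_lie (V : lmodType K) (H : D -> pred V) (br : V -> V -> V)
  : Prop :=
  [/\ graded_space H, bilinear_map br,
      forall i j x y, x \in H i -> y \in H j -> br x y \in H (i + j),
      forall i j x y, x \in H i -> y \in H j ->
        br x y = - (gsign K i j *: br y x)
    & forall i j l x y z, x \in H i -> y \in H j -> z \in H l ->
        gsign K i l *: br x (br y z) + gsign K j i *: br y (br z x)
        + gsign K l j *: br z (br x y) = 0].

(* rho : A -> End(B) is a degree-0 homomorphism of graded Lie algebras, where
   End(B) is graded by degree (T has degree k iff T (H i) <= H (i + k)) and
   carries the graded commutator. *)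
Definition end_rep (A B : lmodType K) (HA : D -> pred A) (brA : A -> A -> A)
  (HB : D -> pred B) (rho : A -> B -> B) : Prop :=
  [/\ bilinear_map rho,
      forall k a, a \in HA k -> forall i b, b \in HB i -> rho a b \in HB (i + k)
    & forall i j a1 a2, a1 \in HA i -> a2 \in HA j -> forall b,
        rho (brA a1 a2) b = rho a1 (rho a2 b) - gsign K i j *: rho a2 (rho a1 b)].

Definition knitted_pair (A B : lmodType K)
  (HA : D -> pred A) (brA : A -> A -> A) (HB : D -> pred B) (brB : B -> B -> B)
  (alpha : A -> B -> B) (beta : B -> A -> A) : Prop :=
  [/\ end_rep HA brA HB alpha, end_rep HB brB HA beta,
      forall i j l a b1 b2, a \in HA i -> b1 \in HB j -> b2 \in HB l ->
        alpha a (brB b1 b2) =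
          brB (alpha a b1) b2 + gsign K i j *: brB b1 (alpha a b2)
          - (gsign K i j *: alpha (beta b1 a) b2
             - gsign K (i + j) l *: alpha (beta b2 a) b1)
    & forall i j l b a1 a2, b \in HB i -> a1 \in HA j -> a2 \in HA l ->
        beta b (brA a1 a2) =
          brA (beta b a1) a2 + gsign K i j *: brA a1 (beta b a2)
          - (gsign K i j *: beta (alpha a1 b) a2
             - gsign K (i + j) l *: beta (alpha a2 b) a1)].

Definition sum_grading (A B : lmodType K) (HA : D -> pred A) (HB : D -> pred B)
  : D -> pred (A * B)%type :=
  fun k => [pred x : (A * B)%type | (x.1 \in HA k) && (x.2 \in HB k)].

End Defs.

(* Main.v *)
Require Import Defs.
From HB Require Import structures.
From mathcomp Require Import all_boot all_order all_algebra.
From Stdlib Require Import ClassicalEpsilon.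
Set Implicit Arguments. Unset Strict Implicit. Unset Printing Implicit Defensive.
Import GRing.Theory.
Local Open Scope ring_scope.

Lemma zapp (V : zmodType) (S : V) : S + 0 = 0 -> S = 0.
Proof. by rewrite addr0. Qed.

Ltac zfront t := do 60? rewrite (addrCA _ t).
Ltac zcancel :=
  match goal with
  | |- 0 = 0 => reflexivity
  | |- ?S = 0 =>
    match S with
    | context [ - ?t ] => zfront t; zfront (- t); rewrite addKr; zcancel
    end
  end.
Ltac znorm := rewrite ?(scalerDr, scalerN, scaleN1r, scale1r, scaleNr, opprD, opprK, oppr0, addr0, add0r, scaler0, scale0r).
Ltac zsolve := apply/eqP; rewrite -subr_eq0; apply/eqP; znorm;
  apply: zapp; rewrite -?addrA; zcancel.

Lemma par_addZ (i j : int) : odd (absz (i + j)) = odd (absz i) (+) odd (absz j).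
Proof.
case: i => m; case: j => n.
- by rewrite -PoszD absz_nat oddD.
- rewrite NegzE abszN !absz_nat.
  case: (leqP n.+1 m) => h.
  + by rewrite (distnEl h) (oddB h).
  + have h' := ltnW h. by rewrite (distnEr h') (oddB h') addbC.
- rewrite NegzE abszN !absz_nat addrC.
  case: (leqP m.+1 n) => h.
  + by rewrite (distnEl h) (oddB h) addbC.
  + have h' := ltnW h. by rewrite (distnEr h') (oddB h').
- rewrite !NegzE -opprD !abszN -PoszD !absz_nat.
  by rewrite oddD.
Qed.

Lemma par_add (g : grading) (i j : degT g) : par (i + j) = par i (+) par j.
Proof.
case: g i j => /= i j; first exact: par_addZ.
by rewrite odd_mod ?oddD.
Qed.

Section GS.
Variables (K : fieldType) (g : grading) (V : lmodType K).
Variable (H : degT g -> pred V).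
Hypothesis Hsub : forall k, is_subspace (H k).

Lemma mem0 k : 0 \in H k. Proof. by case: (Hsub k). Qed.
Lemma memZD k c u v : u \in H k -> v \in H k -> c *: u + v \in H k.
Proof. by case: (Hsub k) => _; apply. Qed.
Lemma memD k u v : u \in H k -> v \in H k -> u + v \in H k.
Proof. by move=> hu hv; have := memZD 1 hu hv; rewrite scale1r. Qed.
Lemma memZ k c u : u \in H k -> c *: u \in H k.
Proof. by move=> hu; have := memZD c hu (mem0 k); rewrite addr0. Qed.
Lemma memN k u : u \in H k -> - u \in H k.
Proof. by move=> hu; have := memZ (-1) hu; rewrite scaleN1r. Qed.

Lemma collect (l : seq (degT g * V)) : all (fun p => p.2 \in H p.1) l ->
  exists s (f : degT g -> V), [/\ uniq s, forall k, f k \in H k,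
    forall k, k \notin s -> f k = 0, {subset s <= map fst l}
    & \sum_(p <- l) p.2 = \sum_(k <- s) f k].
Proof.
elim: l => [|[k x] l IH] /=.
  move=> _; exists [::], (fun _ => 0); split => //; first by move=> k; apply: mem0.
  by rewrite !big_nil.
case/andP => hx /IH [s [f [us hf h0 hsub hsum]]].
pose f' := fun j => if j == k then x + f k else f j.
have hf' : forall j, f' j \in H j.
  by move=> j; rewrite /f'; case: eqP => [->|_] //; apply: memD.
case ks: (k \in s).
- exists s, f'; split => //.
  + by move=> j js; rewrite /f'; case: eqP => [ej|_]; [rewrite ej ks in js|apply: h0].
  + by move=> j /hsub; rewrite inE => ->; rewrite orbT.
  + rewrite big_cons /= hsum (bigD1_seq k ks us) (bigD1_seq k ks us) /= /f' eqxx addrA.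
    congr (_ + _); apply: eq_bigr => j /negPf ->; done.
- exists (k :: s), f'; split => //.
  + by rewrite /= ks.
  + move=> j; rewrite inE negb_or => /andP [/negPf jk js]; rewrite /f' jk; exact: h0.
  + move=> j; rewrite !inE => /orP [->//|/hsub ->]; by rewrite orbT.
  + rewrite !big_cons /= hsum /f' eqxx (h0 k) ?ks // addr0; congr (_ + _).
    apply: eq_big_seq => j js; case: eqP => // ejk; by rewrite ejk ks in js.
Qed.

Definition Par (b : bool) (v : V) := exists l : seq (degT g * V),
  all (fun p => (p.2 \in H p.1) && (par p.1 == b)) l /\ v = \sum_(p <- l) p.2.

Lemma Par0 b : Par b 0.
Proof. by exists [::]; rewrite big_nil. Qed.

Lemma ParZD b c u v : Par b u -> Par b v -> Par b (c *: u + v).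
Proof.
move=> [lu [hu ->]] [lv [hv ->]].
exists (map (fun p => (p.1, c *: p.2)) lu ++ lv); split.
  rewrite all_cat hv andbT all_map; apply/allP => p /(allP hu) /andP [h1 h2] /=.
  by rewrite memZ.
by rewrite big_cat big_map scaler_sumr.
Qed.

Lemma ParN b u : Par b u -> Par b (- u).
Proof. by move=> h; have := ParZD (-1) h (Par0 b); rewrite addr0 scaleN1r. Qed.
Lemma ParD b u v : Par b u -> Par b v -> Par b (u + v).
Proof. by move=> hu hv; have := ParZD 1 hu hv; rewrite scale1r. Qed.
Lemma ParB b u v : Par b u -> Par b v -> Par b (u - v).
Proof. by move=> hu hv; apply: ParD => //; apply: ParN. Qed.

Lemma Par_hom k v : v \in H k -> Par (par k) v.
Proof. by move=> hv; exists [:: (k, v)]; rewrite /= hv eqxx big_seq1. Qed.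

Lemma collectP b l : all (fun p => (p.2 \in H p.1) && (par p.1 == b)) l ->
  exists s (f : degT g -> V), [/\ uniq s, forall k, f k \in H k,
    forall k, k \in s -> par k = b
    & \sum_(p <- l) p.2 = \sum_(k <- s) f k].
Proof.
move=> hl.
have hl' : all (fun p => p.2 \in H p.1) l.
  by apply/allP => p /(allP hl) /andP [].
have [s [f [us hf _ hsub hsum]]] := collect hl'.
exists s, f; split => // k /hsub /mapP [p /(allP hl) /andP [_ /eqP <-] ->].
done.
Qed.

Hypothesis Hdir : forall (s : seq (degT g)) (f : degT g -> V), uniq s -> (forall k, f k \in H k) ->
        \sum_(k <- s) f k = 0 -> forall k, k \in s -> f k = 0.

Lemma Par_uniq e o : Par false e -> Par true o -> e + o = 0 -> e = 0.
Proof.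
move=> [le [hle ->]] [lo [hlo ->]].
have [se [fe [use hfe pe ->]]] := collectP hle.
have [so [fo [uso hfo po ->]]] := collectP hlo.
pose f := fun k => if par k then fo k else fe k.
have hs : uniq (se ++ so).
  rewrite cat_uniq use uso andbT /=; apply/hasPn => k /po pk.
  by apply/negP => /pe; rewrite pk.
have hf : forall k, f k \in H k by move=> k; rewrite /f; case: ifP.
have eqe : \sum_(k <- se) fe k = \sum_(k <- se) f k.
  by apply: eq_big_seq => k /pe pk; rewrite /f pk.
have eqo : \sum_(k <- so) fo k = \sum_(k <- so) f k.
  by apply: eq_big_seq => k /po pk; rewrite /f pk.
rewrite eqe eqo -big_cat => hsum.
have := Hdir hs hf hsum => hz.
rewrite big1_seq // => k /andP [_ ks]; apply: hz; by rewrite mem_cat ks.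
Qed.

Hypothesis Hdec : forall v : V, exists (s : seq (degT g)) (f : degT g -> V),
        [/\ uniq s, forall k, f k \in H k & v = \sum_(k <- s) f k].

Lemma po_ex v : exists o, Par true o /\ Par false (v - o).
Proof.
have [s [f [us hf ->]]] := Hdec v.
exists (\sum_(k <- s | par k) f k); split.
  exists (map (fun k => (k, f k)) [seq k <- s | par k]); split.
    rewrite all_map; apply/allP => k; rewrite mem_filter => /andP [pk _] /=.
    by rewrite hf pk.
  by rewrite big_map big_filter.
exists (map (fun k => (k, f k)) [seq k <- s | ~~ par k]); split.
  rewrite all_map; apply/allP => k; rewrite mem_filter => /andP [pk _] /=.
  by rewrite hf; move/negPf: pk ->.
rewrite big_map big_filter (bigID (@par g)) /= addrC addrK.
done.
Qed.


Definition po (v : V) : V :=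
  epsilon (inhabits 0) (fun o => Par true o /\ Par false (v - o)).

Lemma po_spec v : Par true (po v) /\ Par false (v - po v).
Proof. exact: (epsilon_spec (inhabits 0) _ (po_ex v)). Qed.

Lemma po_uniq v o : Par true o -> Par false (v - o) -> po v = o.
Proof.
move=> ho he; have [hpo hpe] := po_spec v.
have h1 : Par false ((v - o) - (v - po v)) by apply: ParB.
have h2 : Par true (o - po v) by apply: ParB.
have := Par_uniq h1 h2.
have -> : v - o - (v - po v) + (o - po v) = 0.
  by zsolve.
move=> /(_ erefl) h; apply/eqP; rewrite -subr_eq0; apply/eqP; rewrite -h; zsolve.
Qed.

Lemma po_lin c u v : po (c *: u + v) = c *: po u + po v.
Proof.
have [hu1 hu2] := po_spec u; have [hv1 hv2] := po_spec v.
apply: po_uniq; first by apply: ParZD.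
have -> : c *: u + v - (c *: po u + po v) = c *: (u - po u) + (v - po v).
  by zsolve.
by apply: ParZD.
Qed.

Lemma po0 : po 0 = 0.
Proof. by apply: po_uniq; rewrite ?subr0; apply: Par0. Qed.
Lemma poZ c u : po (c *: u) = c *: po u.
Proof. by have := po_lin c u 0; rewrite po0 !addr0. Qed.
Lemma poD u v : po (u + v) = po u + po v.
Proof. by have := po_lin 1 u v; rewrite !scale1r. Qed.
Lemma poN u : po (- u) = - po u.
Proof. by rewrite -scaleN1r poZ scaleN1r. Qed.

Lemma po_hom k v : v \in H k -> po v = if par k then v else 0.
Proof.
move=> hv; have hp := Par_hom hv.
case pk: (par k); rewrite pk in hp; apply: po_uniq => //.
- by rewrite subrr; apply: Par0.
- by apply: Par0.
- by rewrite subr0.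
Qed.

End GS.


Section Bil.
Variables (K : fieldType) (U V W : lmodType K) (f : U -> V -> W).
Hypothesis hf : bilinear_map f.
Lemma blZDl c u1 u2 v : f (c *: u1 + u2) v = c *: f u1 v + f u2 v.
Proof. by case: hf. Qed.
Lemma blZDr u c v1 v2 : f u (c *: v1 + v2) = c *: f u v1 + f u v2.
Proof. by case: hf. Qed.
Lemma bl0l v : f 0 v = 0.
Proof. by have := blZDl 1 0 0 v; rewrite addr0 scaler0 scale1r -{1}[f 0 v]addr0 => /addrI <-. Qed.
Lemma bl0r u : f u 0 = 0.
Proof. by have := blZDr u 1 0 0; rewrite addr0 scaler0 scale1r -{1}[f u 0]addr0 => /addrI <-. Qed.
Lemma blZl c u v : f (c *: u) v = c *: f u v.
Proof. by have := blZDl c u 0 v; rewrite addr0 bl0l addr0. Qed.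
Lemma blZr u c v : f u (c *: v) = c *: f u v.
Proof. by have := blZDr u c v 0; rewrite addr0 bl0r addr0. Qed.
Lemma blDl u1 u2 v : f (u1 + u2) v = f u1 v + f u2 v.
Proof. by have := blZDl 1 u1 u2 v; rewrite !scale1r. Qed.
Lemma blDr u v1 v2 : f u (v1 + v2) = f u v1 + f u v2.
Proof. by have := blZDr u 1 v1 v2; rewrite !scale1r. Qed.
Lemma blNl u v : f (- u) v = - f u v.
Proof. by rewrite -scaleN1r blZl scaleN1r. Qed.
Lemma blNr u v : f u (- v) = - f u v.
Proof. by rewrite -scaleN1r blZr scaleN1r. Qed.
End Bil.

Lemma gsignE (K : fieldType) (g : grading) (i j : degT g) :
  gsign K i j = (-1) ^+ (par i && par j).
Proof. by []. Qed.

Lemma pair_eq (K : fieldType) (A B : lmodType K) (x y : (A * B)%type) :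
  x.1 = y.1 -> x.2 = y.2 -> x = y.
Proof. by case: x y => ? ? [? ?] /= -> ->. Qed.

Section Main.
Variables (K : fieldType) (g : grading) (A B : lmodType K)
  (HA : degT g -> pred A) (HB : degT g -> pred B)
  (brA : A -> A -> A) (brB : B -> B -> B)
  (alpha : A -> B -> B) (beta : B -> A -> A).
Hypothesis GA : graded_lie HA brA.
Hypothesis GB : graded_lie HB brB.
Hypothesis KP : knitted_pair HA brA HB brB alpha beta.

Lemma GAsp : graded_space HA. Proof. by case: GA. Qed.
Lemma GBsp : graded_space HB. Proof. by case: GB. Qed.
Lemma GAsub k : is_subspace (HA k). Proof. by case: GAsp. Qed.
Lemma GBsub k : is_subspace (HB k). Proof. by case: GBsp. Qed.
Lemma bilA : bilinear_map brA. Proof. by case: GA. Qed.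
Lemma bilB : bilinear_map brB. Proof. by case: GB. Qed.
Lemma bilal : bilinear_map alpha. Proof. by case: KP => [[]]. Qed.
Lemma bilbe : bilinear_map beta. Proof. by case: KP => _ [[]]. Qed.

Lemma poA_lin c u v : po HA (c *: u + v) = c *: po HA u + po HA v.
Proof. by case: GAsp => h1 h2 h3; apply: po_lin. Qed.
Lemma poB_lin c u v : po HB (c *: u + v) = c *: po HB u + po HB v.
Proof. by case: GBsp => h1 h2 h3; apply: po_lin. Qed.
Lemma poA_hom k v : v \in HA k -> po HA v = if par k then v else 0.
Proof. by case: GAsp => h1 h2 h3; apply: po_hom. Qed.
Lemma poB_hom k v : v \in HB k -> po HB v = if par k then v else 0.
Proof. by case: GBsp => h1 h2 h3; apply: po_hom. Qed.

Definition twB b a := beta b a - (beta (po HB b) (po HA a) + beta (po HB b) (po HA a)).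
Definition twA a b := alpha a b - (alpha (po HA a) (po HB b) + alpha (po HA a) (po HB b)).

Definition br (x y : (A * B)%type) : (A * B)%type :=
  (brA x.1 y.1 + beta x.2 y.1 - twB y.2 x.1, brB x.2 y.2 + alpha x.1 y.2 - twA y.1 x.2).

Lemma twB_hom i j a b : a \in HA i -> b \in HB j -> twB b a = gsign K j i *: beta b a.
Proof.
move=> ha hb; rewrite /twB (poA_hom ha) (poB_hom hb) gsignE.
case: (par j); case: (par i); rewrite /= ?expr1 ?expr0 ?scale1r ?scaleN1r
  ?(bl0l bilbe) ?(bl0r bilbe) ?addr0 ?subr0 //.
by rewrite opprD addrA subrr add0r.
Qed.
Lemma twA_hom i j a b : a \in HA i -> b \in HB j -> twA a b = gsign K i j *: alpha a b.
Proof.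
move=> ha hb; rewrite /twA (poA_hom ha) (poB_hom hb) gsignE.
case: (par j); case: (par i); rewrite /= ?expr1 ?expr0 ?scale1r ?scaleN1r
  ?(bl0l bilal) ?(bl0r bilal) ?addr0 ?subr0 //.
by rewrite opprD addrA subrr add0r.
Qed.

Lemma brE i j a1 b1 a2 b2 : a1 \in HA i -> b1 \in HB i -> a2 \in HA j -> b2 \in HB j ->
  br (a1, b1) (a2, b2) =
  (brA a1 a2 + beta b1 a2 - gsign K j i *: beta b2 a1,
   brB b1 b2 + alpha a1 b2 - gsign K j i *: alpha a2 b1).
Proof.
move=> ha1 hb1 ha2 hb2; rewrite /br /=.
by rewrite (twB_hom ha1 hb2) (twA_hom ha2 hb1).
Qed.

Lemma br_bil : bilinear_map br.
Proof.
split.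
- move=> c [a1 b1] [a1' b1'] [a2 b2]; apply: pair_eq; rewrite /br /= /twB /twA
    ?(blZDl bilA, blZDl bilB, blZDl bilal, blZDl bilbe, blZDr bilA, blZDr bilB,
      blZDr bilal, blZDr bilbe, poA_lin, poB_lin); zsolve.
- move=> [a1 b1] c [a2 b2] [a2' b2']; apply: pair_eq; rewrite /br /= /twB /twA
    ?(blZDl bilA, blZDl bilB, blZDl bilal, blZDl bilbe, blZDr bilA, blZDr bilB,
      blZDr bilal, blZDr bilbe, poA_lin, poB_lin); zsolve.
Qed.


Lemma memA0 k : 0 \in HA k. Proof. exact: (mem0 GAsub k). Qed.
Lemma memB0 k : 0 \in HB k. Proof. exact: (mem0 GBsub k). Qed.
Lemma memAN k u : u \in HA k -> - u \in HA k. Proof. exact: (memN GAsub). Qed.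
Lemma memBN k u : u \in HB k -> - u \in HB k. Proof. exact: (memN GBsub). Qed.
Lemma memAZ k c u : u \in HA k -> c *: u \in HA k. Proof. exact: (memZ GAsub). Qed.
Lemma memBZ k c u : u \in HB k -> c *: u \in HB k. Proof. exact: (memZ GBsub). Qed.
Lemma memAD k u v : u \in HA k -> v \in HA k -> u + v \in HA k. Proof. exact: (memD GAsub). Qed.
Lemma memBD k u v : u \in HB k -> v \in HB k -> u + v \in HB k. Proof. exact: (memD GBsub). Qed.

Lemma brA_deg i j x y : x \in HA i -> y \in HA j -> brA x y \in HA (i + j).
Proof. by case: GA => _ _ h _ _; apply: h. Qed.
Lemma brB_deg i j x y : x \in HB i -> y \in HB j -> brB x y \in HB (i + j).
Proof. by case: GB => _ _ h _ _; apply: h. Qed.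
Lemma al_deg1 i k a b : a \in HA k -> b \in HB i -> alpha a b \in HB (i + k).
Proof. by move=> ha hb; case: KP => [[_ h _]] _ _ _; apply: (h _ _ ha _ _ hb). Qed.
Lemma al_deg2 i k a b : a \in HA k -> b \in HB i -> alpha a b \in HB (k + i).
Proof. by rewrite addrC; apply: al_deg1. Qed.
Lemma be_deg1 i k a b : b \in HB k -> a \in HA i -> beta b a \in HA (i + k).
Proof. by move=> hb ha; case: KP => _ [_ h _] _ _; apply: (h _ _ hb _ _ ha). Qed.
Lemma be_deg2 i k a b : b \in HB k -> a \in HA i -> beta b a \in HA (k + i).
Proof. by rewrite addrC; apply: be_deg1. Qed.

Lemma antiA i j x y : x \in HA i -> y \in HA j -> brA x y = - (gsign K i j *: brA y x).
Proof. by case: GA => _ _ _ h _; apply: h. Qed.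
Lemma antiB i j x y : x \in HB i -> y \in HB j -> brB x y = - (gsign K i j *: brB y x).
Proof. by case: GB => _ _ _ h _; apply: h. Qed.
Lemma jacA i j l x y z : x \in HA i -> y \in HA j -> z \in HA l ->
  gsign K i l *: brA x (brA y z) + gsign K j i *: brA y (brA z x)
  + gsign K l j *: brA z (brA x y) = 0.
Proof. by case: GA => _ _ _ _ h; apply: h. Qed.
Lemma jacB i j l x y z : x \in HB i -> y \in HB j -> z \in HB l ->
  gsign K i l *: brB x (brB y z) + gsign K j i *: brB y (brB z x)
  + gsign K l j *: brB z (brB x y) = 0.
Proof. by case: GB => _ _ _ _ h; apply: h. Qed.
Lemma repal i j a1 a2 b : a1 \in HA i -> a2 \in HA j ->
  alpha (brA a1 a2) b = alpha a1 (alpha a2 b) - gsign K i j *: alpha a2 (alpha a1 b).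
Proof. by case: KP => [[_ _ h]] _ _ _ h1 h2; apply: h. Qed.
Lemma repbe i j b1 b2 a : b1 \in HB i -> b2 \in HB j ->
  beta (brB b1 b2) a = beta b1 (beta b2 a) - gsign K i j *: beta b2 (beta b1 a).
Proof. by case: KP => _ [_ _ h] _ _ h1 h2; apply: h. Qed.
Lemma knA i j l a b1 b2 : a \in HA i -> b1 \in HB j -> b2 \in HB l ->
  alpha a (brB b1 b2) =
    brB (alpha a b1) b2 + gsign K i j *: brB b1 (alpha a b2)
    - (gsign K i j *: alpha (beta b1 a) b2 - gsign K (i + j) l *: alpha (beta b2 a) b1).
Proof. by case: KP => _ _ h _; apply: h. Qed.
Lemma knB i j l b a1 a2 : b \in HB i -> a1 \in HA j -> a2 \in HA l ->
  beta b (brA a1 a2) =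
    brA (beta b a1) a2 + gsign K i j *: brA a1 (beta b a2)
    - (gsign K i j *: beta (alpha a1 b) a2 - gsign K (i + j) l *: beta (alpha a2 b) a1).
Proof. by case: KP => _ _ _ h; apply: h. Qed.

Ltac mauto := first [ assumption
  | apply: memA0 | apply: memB0
  | apply: memAN; mauto | apply: memBN; mauto
  | apply: memAZ; mauto | apply: memBZ; mauto
  | apply: memAD; mauto | apply: memBD; mauto
  | apply: brA_deg; mauto | apply: brB_deg; mauto
  | apply: al_deg1; mauto | apply: al_deg2; mauto
  | apply: be_deg1; mauto | apply: be_deg2; mauto ].

Definition Jac (i j l : degT g) x y z := gsign K i l *: br x (br y z) + gsign K j i *: br y (br z x)
  + gsign K l j *: br z (br x y).

Ltac bsimp := rewrite ?(bl0l bilA, bl0r bilA, bl0l bilB, bl0r bilB, bl0l bilal, bl0r bilal,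
  bl0l bilbe, bl0r bilbe, blNl bilA, blNr bilA, blNl bilB, blNr bilB, blNl bilal, blNr bilal,
  blNl bilbe, blNr bilbe, blZl bilA, blZr bilA, blZl bilB, blZr bilB, blZl bilal, blZr bilal,
  blZl bilbe, blZr bilbe, addr0, add0r, subr0, sub0r, scaler0, oppr0).

Lemma JAAB i j l a1 a2 b : a1 \in HA i -> a2 \in HA j -> b \in HB l ->
  Jac i j l (a1, 0) (a2, 0) (0, b) = 0.
Proof.
move=> h1 h2 h3; rewrite /Jac.
rewrite (@brE j l a2 0 0 b); try mauto.
rewrite (@brE l i 0 b a1 0); try mauto.
rewrite (@brE i j a1 0 a2 0); try mauto.
bsimp.
rewrite (@brE i (j + l)); try mauto.
rewrite (@brE j (l + i)); try mauto.
rewrite (@brE l (i + j)); try mauto.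
bsimp.
apply: pair_eq => /=.
- rewrite (@knB l i j b a1 a2) // (@antiA j (l + i) a2 (beta b a1)); try mauto.
  rewrite !gsignE !par_add; case: (par i); case: (par j); case: (par l);
    rewrite /= ?expr0 ?expr1.
  all: try zsolve.
- rewrite (@repal i j a1 a2 b) //.
  rewrite !gsignE !par_add; case: (par i); case: (par j); case: (par l);
    rewrite /= ?expr0 ?expr1.
  all: try zsolve.
Qed.

Lemma JABB i j l a b1 b2 : a \in HA i -> b1 \in HB j -> b2 \in HB l ->
  Jac i j l (a, 0) (0, b1) (0, b2) = 0.
Proof.
move=> h1 h2 h3; rewrite /Jac.
rewrite (@brE j l 0 b1 0 b2); try mauto.
rewrite (@brE l i 0 b2 a 0); try mauto.
rewrite (@brE i j a 0 0 b1); try mauto.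
bsimp.
rewrite (@brE i (j + l)); try mauto.
rewrite (@brE j (l + i)); try mauto.
rewrite (@brE l (i + j)); try mauto.
bsimp.
apply: pair_eq => /=.
- rewrite (@repbe j l b1 b2 a) //.
  rewrite !gsignE !par_add; case: (par i); case: (par j); case: (par l);
    rewrite /= ?expr0 ?expr1.
  all: try zsolve.
- rewrite (@knA i j l a b1 b2) // (@antiB l (j + i) b2 (alpha a b1)); try mauto.
  rewrite !gsignE !par_add; case: (par i); case: (par j); case: (par l);
    rewrite /= ?expr0 ?expr1.
  all: try zsolve.
Qed.

Lemma JAAA i j l a1 a2 a3 : a1 \in HA i -> a2 \in HA j -> a3 \in HA l ->
  Jac i j l (a1, 0) (a2, 0) (a3, 0) = 0.
Proof.
move=> h1 h2 h3; rewrite /Jac.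
rewrite (@brE j l a2 0 a3 0); try mauto.
rewrite (@brE l i a3 0 a1 0); try mauto.
rewrite (@brE i j a1 0 a2 0); try mauto.
bsimp.
rewrite (@brE i (j + l)); try mauto.
rewrite (@brE j (l + i)); try mauto.
rewrite (@brE l (i + j)); try mauto.
bsimp.
apply: pair_eq => /=; last by bsimp.
exact: jacA.
Qed.

Lemma JBBB i j l b1 b2 b3 : b1 \in HB i -> b2 \in HB j -> b3 \in HB l ->
  Jac i j l (0, b1) (0, b2) (0, b3) = 0.
Proof.
move=> h1 h2 h3; rewrite /Jac.
rewrite (@brE j l 0 b2 0 b3); try mauto.
rewrite (@brE l i 0 b3 0 b1); try mauto.
rewrite (@brE i j 0 b1 0 b2); try mauto.
bsimp.
rewrite (@brE i (j + l)); try mauto.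
rewrite (@brE j (l + i)); try mauto.
rewrite (@brE l (i + j)); try mauto.
bsimp.
apply: pair_eq => /=; first by bsimp.
exact: jacB.
Qed.

Lemma Jac_rot i j l x y z : Jac i j l x y z = Jac j l i y z x.
Proof. rewrite /Jac; zsolve. Qed.

Lemma Jac_addl i j l x1 x2 y z : Jac i j l (x1 + x2) y z = Jac i j l x1 y z + Jac i j l x2 y z.
Proof. rewrite /Jac !(blDl br_bil, blDr br_bil); zsolve. Qed.

Definition pure i (x : (A * B)%type) :=
  (x.1 \in HA i) && (x.2 == 0) || (x.1 == 0) && (x.2 \in HB i).

Lemma lift1 i j l x y z : (x.1 \in HA i) && (x.2 \in HB i) ->
  (forall x', pure i x' -> Jac i j l x' y z = 0) -> Jac i j l x y z = 0.
Proof.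
case: x => a b /= /andP [ha hb] h.
have -> : (a, b) = (a, 0) + (0, b) by apply: pair_eq => /=; rewrite ?addr0 ?add0r.
by rewrite Jac_addl !h ?addr0 //= /pure /= ?ha ?hb ?eqxx ?orbT.
Qed.

Lemma Jpure i j l x y z : pure i x -> pure j y -> pure l z -> Jac i j l x y z = 0.
Proof.
case: x => a1 b1; case: y => a2 b2; case: z => a3 b3; rewrite /pure /=.
case/orP => [/andP [h1 /eqP ->]|/andP [/eqP -> h1]];
  case/orP => [/andP [h2 /eqP ->]|/andP [/eqP -> h2]];
  case/orP => [/andP [h3 /eqP ->]|/andP [/eqP -> h3]].
- exact: JAAA.
- exact: JAAB.
- by rewrite Jac_rot Jac_rot; apply: JAAB.
- exact: JABB.
- by rewrite Jac_rot; apply: JAAB.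
- by rewrite Jac_rot; apply: JABB.
- by rewrite Jac_rot Jac_rot; apply: JABB.
- exact: JBBB.
Qed.

Lemma Jhom i j l x y z : (x.1 \in HA i) && (x.2 \in HB i) ->
  (y.1 \in HA j) && (y.2 \in HB j) -> (z.1 \in HA l) && (z.2 \in HB l) ->
  Jac i j l x y z = 0.
Proof.
move=> hx hy hz; apply: lift1 => // x' px.
rewrite Jac_rot; apply: lift1 => // y' py.
rewrite Jac_rot; apply: lift1 => // z' pz.
rewrite Jac_rot; exact: Jpure.
Qed.

Lemma sgE k (x : (A * B)%type) :
  (x \in sum_grading HA HB k) = (x.1 \in HA k) && (x.2 \in HB k).
Proof. by []. Qed.

Lemma sg_sub k : is_subspace (sum_grading HA HB k).
Proof.
split; first by rewrite sgE memA0 memB0.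
move=> c u v; rewrite !sgE => /andP [hu1 hu2] /andP [hv1 hv2] /=.
by rewrite memAD ?memAZ ?memBD ?memBZ.
Qed.

Lemma sum_pair (I : Type) (s : seq I) (F : I -> A) (G : I -> B) :
  \sum_(k <- s) ((F k, G k) : (A * B)%type) = (\sum_(k <- s) F k, \sum_(k <- s) G k).
Proof. by elim: s => [|x s IH]; rewrite ?big_nil ?big_cons ?IH. Qed.

Lemma sum_fst (I : Type) (s : seq I) (F : I -> (A * B)%type) :
  (\sum_(k <- s) F k).1 = \sum_(k <- s) (F k).1.
Proof. by elim: s => [|x s IH]; rewrite ?big_nil ?big_cons //= IH. Qed.
Lemma sum_snd (I : Type) (s : seq I) (F : I -> (A * B)%type) :
  (\sum_(k <- s) F k).2 = \sum_(k <- s) (F k).2.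
Proof. by elim: s => [|x s IH]; rewrite ?big_nil ?big_cons //= IH. Qed.

Lemma sg_space : graded_space (sum_grading HA HB).
Proof.
split.
- exact: sg_sub.
- case=> a b.
  case: GAsp => _ decA _; case: GBsp => _ decB _.
  have [sA [fA [_ hfA ->]]] := decA a.
  have [sB [fB [_ hfB ->]]] := decB b.
  pose l := map (fun k => (k, ((fA k, 0) : (A * B)%type))) sA ++
            map (fun k => (k, ((0, fB k) : (A * B)%type))) sB.
  have hl : all (fun p => p.2 \in sum_grading HA HB p.1) l.
    rewrite all_cat !all_map; apply/andP; split; apply/allP => k _ /=;
      by rewrite sgE /= ?hfA ?hfB ?memA0 ?memB0.
  have [s [f [us hf _ _ hsum]]] := collect sg_sub hl.
  exists s, f; split => //; rewrite -hsum /l big_cat !big_map /=.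
  rewrite (sum_pair sA fA (fun _ => 0)) (sum_pair sB (fun _ => 0) fB) !big1_eq.
  by apply: pair_eq => /=; rewrite ?addr0 ?add0r.
- move=> s f us hf hsum k ks.
  case: GAsp => _ _ dirA; case: GBsp => _ _ dirB.
  have h1 : \sum_(k <- s) (f k).1 = 0 by rewrite -sum_fst hsum.
  have h2 : \sum_(k <- s) (f k).2 = 0 by rewrite -sum_snd hsum.
  have e1 := dirA s (fun k => (f k).1) us (fun k => proj1 (andP (hf k))) h1 k ks.
  have e2 := dirB s (fun k => (f k).2) us (fun k => proj2 (andP (hf k))) h2 k ks.
  by apply: pair_eq.
Qed.

Lemma br_deg i j x y : x \in sum_grading HA HB i -> y \in sum_grading HA HB j ->
  br x y \in sum_grading HA HB (i + j).
Proof.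
case: x => a1 b1; case: y => a2 b2; rewrite !sgE => /andP [h1 h2] /andP [h3 h4].
simpl in h1, h2, h3, h4.
rewrite (brE h1 h2 h3 h4) /=.
apply/andP; split.
- apply: memAD; [apply: memAD|apply: memAN; apply: memAZ]; try mauto.
- apply: memBD; [apply: memBD|apply: memBN; apply: memBZ]; try mauto.
Qed.

Lemma br_anti i j x y : x \in sum_grading HA HB i -> y \in sum_grading HA HB j ->
  br x y = - (gsign K i j *: br y x).
Proof.
case: x => a1 b1; case: y => a2 b2; rewrite !sgE => /andP [h1 h2] /andP [h3 h4].
simpl in h1, h2, h3, h4.
rewrite (brE h1 h2 h3 h4) (brE h3 h4 h1 h2).
apply: pair_eq => /=.
- rewrite (antiA h1 h3) !gsignE; case: (par i); case: (par j); rewrite /= ?expr0 ?expr1.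
  all: try zsolve.
- rewrite (antiB h2 h4) !gsignE; case: (par i); case: (par j); rewrite /= ?expr0 ?expr1.
  all: try zsolve.
Qed.

End Main.


Unset Implicit Arguments.


Theorem theorem1p2 (K : fieldType) (g : grading) (A B : lmodType K)
  (HA : degT g -> pred A) (HB : degT g -> pred B)
  (brA : A -> A -> A) (brB : B -> B -> B)
  (alpha : A -> B -> B) (beta : B -> A -> A) :
  graded_lie HA brA -> graded_lie HB brB ->
  knitted_pair HA brA HB brB alpha beta ->
  exists br : (A * B)%type -> (A * B)%type -> (A * B)%type,
    graded_lie (sum_grading HA HB) br /\
    (forall (i j : degT g) (a1 a2 : A) (b1 b2 : B),
       a1 \in HA i -> b1 \in HB i -> a2 \in HA j -> b2 \in HB j ->
       br (a1, b1) (a2, b2) =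
         (brA a1 a2 + beta b1 a2 - gsign K j i *: beta b2 a1,
          brB b1 b2 + alpha a1 b2 - gsign K j i *: alpha a2 b1)).
Proof.
move=> GA GB KP.
exists (br HA HB brA brB alpha beta); split; last first.
  by move=> i j a1 a2 b1 b2 h1 h2 h3 h4; eapply brE; eassumption.
split.
- by eapply sg_space; eassumption.
- by eapply br_bil; eassumption.
- by move=> i j x y; eapply br_deg; eassumption.
- by move=> i j x y; eapply br_anti; eassumption.
- by move=> i j l x y z; rewrite !sgE => hx hy hz; eapply Jhom; eassumption.
Qed.
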